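(* Let $\epsilon\neq 0$ be a constant. Let the functions $m^i_{\ e}$ ($3\le i\le e\le N$, with $m^i_{\ e}=0$ for $e<i$ and $m^i_{\ i}>0$) be smooth functions of the variables $(x^3-\epsilon u, x^4,\dots,x^N)$ only. Put $g_{ef}=\sum_i m^i_{\ e}m^i_{\ f}$ and write $m_{33}=m^3_{\ 3}$. Let the following be arbitrary smooth functions: - $H(u,x^3,\dots,x^N)$; - $F_2$ and $E_n$ ($n=4,\dots,N$), functions of $(x^3-\epsilon u,x^4,\dots,x^N)$; - $f(x^3,\dots,x^N)$. Let $\Phi(u,x^3,\dots,x^N)$ be any smooth function with $\partial_u\Phi = \partial_3 H$, and fix $u_0$. Define $$\hat W_3 = \Phi + \epsilon^{-1}\big(F_2+f\big),\qquad L_n = \partial_nH + \epsilon\,\partial_n\Phi+\partial_n f,$$ $$\hat W_n(u,x)=\int_{u_0}^{u} L_n(z,x^3-\epsilon u+\epsilon z,x^4,\dots,x^N)\,dz+E_n(x^3-\epsilon u,x^4,\dots,x^N).$$ Then the vector field $$X = n + F_2\,\ell+\epsilon\, m_{33}\, m_3$$ is a Killing vector field of the metric $g = 2\,du\,\big(dv + H\,du + \hat W_e\,dx^e\big) + g_{ef}\,dx^e dx^f$, with $$g(X,X) = 2F_2+\epsilon^2 m_{33}^{\,2}.$$ In particular, for any choice of $F_2\le -\tfrac12\epsilon^2m_{33}^{\,2}$ (possible because $F_2$ and $m_{33}$ depend on the same variables), $X$ is everywhere timelike or null.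
   Context: Work on an open set with coordinates $(u,v,x^3,\dots,x^N)$, $N\ge 3$. The indices $e,f$ run over $3,\dots,N$ and are summed, and the indices $n,m$ run over $4,\dots,N$. Derivatives are written $\partial_u=\partial/\partial u$ and $\partial_e=\partial/\partial x^e$. The frame vectors associated with the metric $g$ above are $$\ell=\partial_v,\qquad n=\partial_u - H\,\partial_v,\qquad m_i = m_i^{\ e}\big(\partial_e-\hat W_e\,\partial_v\big),$$ where $m_i^{\ e}$ is the inverse of the matrix $(m^i_{\ e})$, i.e. $\sum_e m^i_{\ e}m_j^{\ e}=\delta_{ij}$. Since $(m^i_{\ e})$ is upper triangular, $m_3 = m_{33}^{-1}\big(\partial_3 - \hat W_3\,\partial_v\big)$. For a vector field $X = X_1 n+X_2\ell+\sum_i X_im_i$ one has $g(X,X) = 2X_1X_2+\sum_i X_i^2$. *)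

(* Defs.v *)
From Stdlib Require Import Reals Lra List Arith Bool.
Open Scope R_scope.

(* A point of the coordinate space: coordinate 1 = u, 2 = v, 3..N = x^3..x^N.
   Coordinates with index 0 or > N are ignored (all functions used below
   are required not to depend on them). *)
Definition Point := nat -> R.

Definition upd (p : Point) (i : nat) (t : R) : Point :=
  fun j => if Nat.eqb j i then t else p j.

Definition kdelta (i j : nat) : R := if Nat.eqb i j then 1 else 0.

Definition has_pd (f : Point -> R) (i : nat) (p : Point) (l : R) : Prop :=
  derivable_pt_lim (fun t => f (upd p i t)) (p i) l.

Definition depends_only_on (S : nat -> Prop) (f : Point -> R) : Prop :=
  forall p q : Point, (forall i, S i -> p i = q i) -> f p = f q.

Definition contN (N : nat) (f : Point -> R) : Prop :=
  forall (p : Point) (eps : R), 0 < eps -> exists delta, 0 < delta /\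
    forall q : Point, (forall i, (1 <= i <= N)%nat -> Rabs (q i - p i) < delta) ->
      Rabs (f q - f p) < eps.

Fixpoint CkN (N k : nat) (f : Point -> R) : Prop :=
  match k with
  | O => contN N f
  | S k' => contN N f /\
      forall i, (1 <= i <= N)%nat ->
        exists g : Point -> R, (forall p, has_pd f i p (g p)) /\ CkN N k' g
  end.

Definition smoothN (N : nat) (f : Point -> R) : Prop := forall k, CkN N k f.

Definition sumN (N : nat) (F : nat -> R) : R :=
  fold_right Rplus 0 (map F (seq 1 N)).

(* the substitution x^3 |-> x^3 - eps u : a function of (x^3 - eps u, x^4..x^N)
   is  fun p => ft (shift eps p)  with ft depending only on x^3..x^N. *)
Definition shift (eps : R) (p : Point) : Point := upd p 3 (p 3%nat - eps * p 1%nat).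

(* the integration path  z |-> (z, v, x^3 - eps u + eps z, x^4, ...) *)
Definition path (eps : R) (p : Point) (z : R) : Point :=
  upd (upd p 1 z) 3 (p 3%nat - eps * p 1%nat + eps * z).


(* Metric components g_ab, a,b in 1..N, of
   g = 2 du (dv + H du + W_e dx^e) + g_ef dx^e dx^f,  g_ef = sum_i m^i_e m^i_f. *)
Definition gmet (N : nat) (H : Point -> R) (W : nat -> Point -> R)
  (m : nat -> nat -> Point -> R) (a b : nat) (p : Point) : R :=
  if Nat.eqb a 1 then
    (if Nat.eqb b 1 then 2 * H p
     else if Nat.eqb b 2 then 1
     else if (3 <=? b)%nat && (b <=? N)%nat then W b p else 0)
  else if Nat.eqb a 2 then
    (if Nat.eqb b 1 then 1 else 0)
  else if (3 <=? a)%nat && (a <=? N)%nat then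
    (if Nat.eqb b 1 then W a p
     else if (3 <=? b)%nat && (b <=? N)%nat then
       fold_right Rplus 0 (map (fun i => m i a p * m i b p) (seq 3 (N - 2)))
     else 0)
  else 0.

Definition gform (N : nat) (g : nat -> nat -> Point -> R) (p : Point)
  (Y Z : nat -> R) : R :=
  sumN N (fun a => sumN N (fun b => g a b p * Y a * Z b)).

(* Killing equation (L_X g)_ab = 0 in coordinates:
   X^c d_c g_ab + g_cb d_a X^c + g_ac d_b X^c = 0. *)
Definition killing (N : nat) (g : nat -> nat -> Point -> R)
  (X : Point -> nat -> R) : Prop :=
  forall (p : Point) (a b : nat), (1 <= a <= N)%nat -> (1 <= b <= N)%nat ->
    exists Dg DXa DXb : nat -> R,
      (forall c, (1 <= c <= N)%nat ->
         has_pd (g a b) c p (Dg c) /\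
         has_pd (fun q => X q c) a p (DXa c) /\
         has_pd (fun q => X q c) b p (DXb c)) /\
      sumN N (fun c => X p c * Dg c + g c b p * DXa c + g a c p * DXb c) = 0.

(* Frame vectors (components in the coordinates u=1, v=2, x^e=e):
   l = d_v,  n = d_u - H d_v,  m_3 = m33^{-1} (d_3 - W_3 d_v). *)
Definition ellv (p : Point) (c : nat) : R := kdelta c 2.
Definition nvec (H : Point -> R) (p : Point) (c : nat) : R :=
  kdelta c 1 - H p * kdelta c 2.
Definition m3vec (m33 : Point -> R) (W3 : Point -> R) (p : Point) (c : nat) : R :=
  / m33 p * (kdelta c 3 - W3 p * kdelta c 2).

(* Main.v *)
Require Import Defs.
From Stdlib Require Import Reals Lra List Arith Lia.
From Stdlib Require Import Classical ClassicalEpsilon FunctionalExtensionality.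
Open Scope R_scope.

Definition RI (g : R -> R) (a b : R) : R :=
  match excluded_middle_informative (exists pr : Riemann_integrable g a b, True) with
  | left H => RiemannInt (proj1_sig (constructive_indefinite_description _ H))
  | right _ => 0
  end.

Lemma RI_eq : forall g a b (pr : Riemann_integrable g a b), RiemannInt pr = RI g a b.
Proof.
  intros g a b pr. unfold RI.
  destruct (excluded_middle_informative _) as [H|H].
  - apply RiemannInt_P5.
  - exfalso; apply H; exists pr; exact I.
Qed.

Definition Cont (g : R -> R) := forall x, continuity_pt g x.

Lemma cont_of_eps : forall f x0,
  (forall e, 0 < e -> exists d, 0 < d /\ forall x, Rabs (x - x0) < d -> Rabs (f x - f x0) < e) ->
  continuity_pt f x0.
Proof.
  intros f x0 H e He. destruct (H e He) as [d [Hd Hx]].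
  exists d; split; auto. intros x [_ Hx2]. apply Hx. exact Hx2.
Qed.

Lemma eps_of_cont : forall f x0, continuity_pt f x0 ->
  forall e, 0 < e -> exists d, 0 < d /\ forall x, Rabs (x - x0) < d -> Rabs (f x - f x0) < e.
Proof.
  intros f x0 H e He. destruct (H e He) as [d [Hd Hx]].
  exists d; split; auto. intros x Hx1.
  destruct (Req_dec x x0) as [->|Hne].
  - unfold Rminus; rewrite Rplus_opp_r, Rabs_R0; auto.
  - apply (Hx x). split. split; [exact I|auto]. exact Hx1.
Qed.

Lemma integ : forall g a b, Cont g -> Riemann_integrable g a b.
Proof.
  intros g a b Hg. destruct (Rle_dec a b).
  - apply continuity_implies_RiemannInt; auto.
  - apply RiemannInt_P1. apply continuity_implies_RiemannInt; [lra|auto].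
Qed.

Lemma RI_chasles : forall g a b c, Cont g -> RI g a b + RI g b c = RI g a c.
Proof.
  intros. rewrite <- (RI_eq _ _ _ (integ g a b H)), <- (RI_eq _ _ _ (integ g b c H)),
    <- (RI_eq _ _ _ (integ g a c H)). apply RiemannInt_P26.
Qed.

Lemma Cont_lin : forall f g l, Cont f -> Cont g -> Cont (fun x => f x + l * g x).
Proof.
  intros f g l Hf Hg x. apply continuity_pt_plus; auto.
  apply continuity_pt_scal; auto.
Qed.

Lemma RI_lin : forall f g l a b, Cont f -> Cont g ->
  RI (fun x => f x + l * g x) a b = RI f a b + l * RI g a b.
Proof.
  intros.
  rewrite <- (RI_eq _ _ _ (integ f a b H)), <- (RI_eq _ _ _ (integ g a b H0)),
    <- (RI_eq _ _ _ (integ _ a b (Cont_lin f g l H H0))). apply RiemannInt_P13.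
Qed.

Lemma Cont_const : forall c, Cont (fun _ => c).
Proof. intros c x. apply continuity_pt_const. intros u v; auto. Qed.

Lemma RI_const : forall c a b, RI (fun _ => c) a b = c * (b - a).
Proof.
  intros. rewrite <- (RI_eq (fun _ => c) a b (RiemannInt_P14 a b c)). apply RiemannInt_P15.
Qed.

Lemma RI_scal : forall g l a b, Cont g -> RI (fun x => l * g x) a b = l * RI g a b.
Proof.
  intros. replace (fun x => l * g x) with (fun x => (fun _ => 0) x + l * g x).
  rewrite RI_lin; auto. rewrite RI_const. ring. apply Cont_const.
  apply functional_extensionality; intros; ring.
Qed.

Lemma RI_minus : forall f g a b, Cont f -> Cont g ->
  RI (fun x => f x - g x) a b = RI f a b - RI g a b.
Proof.
  intros. replace (fun x => f x - g x) with (fun x => f x + (-1) * g x).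
  rewrite RI_lin; auto. ring.
  apply functional_extensionality; intros; ring.
Qed.

Lemma RI_swap : forall g a b, Cont g -> RI g a b = - RI g b a.
Proof.
  intros. rewrite <- (RI_eq _ _ _ (integ g a b H)), <- (RI_eq _ _ _ (integ g b a H)).
  apply RiemannInt_P8.
Qed.

Lemma Cont_abs : forall g, Cont g -> Cont (fun x => Rabs (g x)).
Proof. intros g H x. apply (continuity_pt_comp g Rabs); auto. apply Rcontinuity_abs. Qed.

Lemma RI_bound_le : forall g a b M, Cont g -> a <= b ->
  (forall x, a <= x <= b -> Rabs (g x) <= M) -> Rabs (RI g a b) <= M * (b - a).
Proof.
  intros g a b M Hg Hab HM.
  rewrite <- (RI_eq _ _ _ (integ g a b Hg)).
  eapply Rle_trans. apply (RiemannInt_P17 (integ g a b Hg) (integ _ a b (Cont_abs g Hg)) Hab).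
  edestruct RiemannInt_const_bound with (h := integ _ a b (Cont_abs g Hg)) (l := -M) (u := M) as [_ H2]; [exact Hab| |exact H2].
  - intros x Hx. specialize (HM x ltac:(lra)). split; auto.
    pose proof (Rabs_pos (g x)). lra.
Qed.

Lemma RI_bound : forall g a b M, Cont g ->
  (forall x, Rmin a b <= x <= Rmax a b -> Rabs (g x) <= M) -> Rabs (RI g a b) <= M * Rabs (b - a).
Proof.
  intros g a b M Hg HM. destruct (Rle_dec a b).
  - rewrite (Rabs_right (b - a)) by lra. apply RI_bound_le; auto.
    intros x Hx; apply HM. rewrite Rmin_left, Rmax_right; lra.
  - rewrite RI_swap, Rabs_Ropp by auto. rewrite (Rabs_left (b - a)) by lra.
    replace (M * - (b - a)) with (M * (a - b)) by ring.
    apply RI_bound_le; auto. lra. intros x Hx; apply HM. rewrite Rmin_right, Rmax_left; lra.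
Qed.

Lemma FTC : forall g a x0, Cont g -> derivable_pt_lim (fun x => RI g a x) x0 (g x0).
Proof.
  intros g a x0 Hg e He.
  destruct (eps_of_cont g x0 (Hg x0) (e/2) ltac:(lra)) as [d [Hd Hx]].
  exists (mkposreal d Hd). intros h Hh0 Hh. simpl in Hh.
  rewrite <- (RI_chasles g a x0 (x0 + h)) by auto.
  replace (RI g a x0 + RI g x0 (x0 + h) - RI g a x0) with (RI g x0 (x0+h)) by ring.
  assert (E : RI g x0 (x0 + h) = RI (fun x => g x - g x0) x0 (x0 + h) + g x0 * h).
  { rewrite RI_minus; auto. rewrite RI_const. ring. apply Cont_const. }
  rewrite E.
  replace ((RI (fun x => g x - g x0) x0 (x0 + h) + g x0 * h) / h - g x0)
    with (RI (fun x => g x - g x0) x0 (x0 + h) / h) by (field; auto).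
  unfold Rdiv. rewrite Rabs_mult, Rabs_inv.
  assert (B : Rabs (RI (fun x => g x - g x0) x0 (x0 + h)) <= e/2 * Rabs (x0 + h - x0)).
  { apply RI_bound. intro x; apply continuity_pt_minus; auto. apply continuity_pt_const; intros u v; auto.
    intros x Hx'. left. apply Hx.
    destruct (Rle_dec x0 (x0+h)).
    - rewrite Rmin_left, Rmax_right in Hx' by lra. rewrite Rabs_right by lra. rewrite Rabs_right in Hh by lra. lra.
    - rewrite Rmin_right, Rmax_left in Hx' by lra. rewrite Rabs_left1 by lra. rewrite Rabs_left in Hh by lra. lra. }
  replace (x0 + h - x0) with h in B by ring.
  assert (Rabs h > 0) by (apply Rabs_pos_lt; auto).
  apply Rle_lt_trans with (e/2 * Rabs h * / Rabs h).
  apply Rmult_le_compat_r. left; apply Rinv_0_lt_compat; lra. auto.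
  field_simplify; lra.
Qed.

Definition JC (phi : R -> R -> R) := forall z t e, 0 < e -> exists d, 0 < d /\
  forall z' t', Rabs (z' - z) < d -> Rabs (t' - t) < d -> Rabs (phi z' t' - phi z t) < e.

Lemma JC_cont1 : forall phi t, JC phi -> Cont (fun z => phi z t).
Proof.
  intros phi t H z. apply cont_of_eps. intros e He.
  destruct (H z t e He) as [d [Hd Hx]]. exists d; split; auto.
  intros x Hx'. apply Hx; auto. unfold Rminus; rewrite Rplus_opp_r, Rabs_R0; auto.
Qed.

Lemma UE : forall psi, JC psi -> forall a b t0 e, a <= b -> 0 < e ->
  exists d, 0 < d /\ forall z t, a <= z <= b -> Rabs (t - t0) < d -> Rabs (psi z t - psi z t0) < e.
Proof.
  intros psi HJ a b t0 e Hab He.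
  assert (Loc : forall s, exists d1, 0 < d1 /\ forall z t, Rabs (z - s) < d1 -> Rabs (t - t0) < d1 ->
     Rabs (psi z t - psi z t0) < e).
  { intro s. destruct (HJ s t0 (e/2) ltac:(lra)) as [d [Hd Hx]]. exists d; split; auto.
    intros z t Hz Ht. assert (H1 := Hx z t Hz Ht). assert (H2 := Hx z t0 Hz ltac:(unfold Rminus; rewrite Rplus_opp_r, Rabs_R0; auto)).
    replace (psi z t - psi z t0) with ((psi z t - psi s t0) - (psi z t0 - psi s t0)) by ring.
    eapply Rle_lt_trans. apply Rabs_triang. rewrite Rabs_Ropp. lra. }
  set (P := fun x => exists d, 0 < d /\ forall z t, a <= z <= x -> Rabs (t - t0) < d -> Rabs (psi z t - psi z t0) < e).
  set (E := fun x => a <= x <= b /\ P x).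
  assert (Ea : E a).
  { split; [lra|]. destruct (Loc a) as [d1 [Hd1 Hl]]. exists d1; split; auto.
    intros z t Hz Ht. apply Hl; auto. replace (z - a) with 0 by lra. rewrite Rabs_R0; auto. }
  assert (Hb : bound E) by (exists b; intros x [Hx _]; lra).
  destruct (completeness E Hb (ex_intro _ a Ea)) as [s [Hub Hlub]].
  assert (Has : a <= s) by (apply Hub; auto).
  assert (Hsb : s <= b) by (apply Hlub; intros x [Hx _]; lra).
  destruct (Loc s) as [d1 [Hd1 Hl]].
  assert (Hex : exists x, E x /\ s - d1 < x).
  { apply NNPP; intro Hn.
    assert (is_upper_bound E (s - d1)).
    { intros y Ey. destruct (Rle_dec y (s - d1)); auto. exfalso; apply Hn; exists y; split; auto; lra. }
    specialize (Hlub _ H). lra. }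
  destruct Hex as [x [[Hx1 [dx [Hdx Hpx]]] Hx2]].
  set (y := Rmin (s + d1/2) b).
  assert (Py : P y).
  { exists (Rmin dx d1). split. apply Rmin_pos; auto.
    intros z t Hz Ht. destruct (Rle_dec z x).
    - apply Hpx. lra. eapply Rlt_le_trans; [exact Ht|apply Rmin_l].
    - apply Hl. assert (z <= s + d1/2) by (assert (y <= s + d1/2) by apply Rmin_l; lra).
      apply Rabs_def1; lra. eapply Rlt_le_trans; [exact Ht|apply Rmin_r]. }
  assert (Ey : E y).
  { split; auto. split. unfold y; apply Rmin_glb; lra. apply Rmin_r. }
  assert (y <= s) by (apply Hub; auto).
  unfold y in *.
  destruct (Rle_dec (s + d1/2) b).
  - rewrite Rmin_left in H by lra. lra.
  - rewrite Rmin_right in Py by lra. destruct Py as [d [Hd Hp]]. exists d; split; auto.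
Qed.

Lemma mvt_bound : forall (F F' : R -> R) t0 h e,
  (forall s, derivable_pt_lim F s (F' s)) ->
  (forall s, Rabs (s - t0) <= Rabs h -> Rabs (F' s - F' t0) <= e) ->
  Rabs (F (t0 + h) - F t0 - h * F' t0) <= e * Rabs h.
Proof.
  intros F F' t0 h e HD HB.
  destruct (Rtotal_order h 0) as [Hn|[Hz|Hp]].
  - destruct (MVT_cor2 F F' (t0 + h) t0 ltac:(lra) (fun c _ => HD c)) as [c [Hc1 Hc2]].
    replace (F (t0 + h) - F t0 - h * F' t0) with ((F' c - F' t0) * h) by
      (replace (F (t0+h)) with (F t0 - F' c * (t0 - (t0 + h))) by lra; ring).
    rewrite Rabs_mult. apply Rmult_le_compat_r. apply Rabs_pos. apply HB.
    rewrite Rabs_left by lra. rewrite Rabs_left1 by lra. lra.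
  - subst. rewrite Rplus_0_r. replace (F t0 - F t0 - 0 * F' t0) with 0 by ring.
    rewrite Rabs_R0. lra.
  - destruct (MVT_cor2 F F' t0 (t0 + h) ltac:(lra) (fun c _ => HD c)) as [c [Hc1 Hc2]].
    replace (F (t0 + h) - F t0 - h * F' t0) with ((F' c - F' t0) * h) by
      (rewrite Hc1; ring).
    rewrite Rabs_mult. apply Rmult_le_compat_r. apply Rabs_pos. apply HB.
    rewrite Rabs_right by lra. rewrite Rabs_right by lra. lra.
Qed.

Lemma dpl_affine : forall b k t0, derivable_pt_lim (fun t => b + k * t) t0 k.
Proof.
  intros b k t0 e He. exists (mkposreal e He). intros h Hh _.
  replace ((b + k * (t0 + h) - (b + k * t0)) / h - k) with 0 by (field; auto).
  rewrite Rabs_R0; auto.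
Qed.

Lemma dpl_cont : forall f x l, derivable_pt_lim f x l ->
  forall e, 0 < e -> exists d, 0 < d /\ forall h, Rabs h < d -> Rabs (f (x + h) - f x) < e.
Proof.
  intros f x l H e He.
  assert (C : continuity_pt f x) by (apply derivable_continuous_pt; exists l; exact H).
  destruct (eps_of_cont f x C e He) as [d [Hd Hx]]. exists d; split; auto.
  intros h Hh. apply Hx. replace (x + h - x) with h by ring. auto.
Qed.

Lemma FTC_aff : forall g a b k t0, Cont g ->
  derivable_pt_lim (fun t => RI g a (b + k * t)) t0 (k * g (b + k * t0)).
Proof.
  intros. rewrite Rmult_comm.
  apply (derivable_pt_lim_comp (fun t => b + k * t) (fun x => RI g a x)).
  apply dpl_affine. apply FTC; auto.
Qed.

Lemma leibniz : forall (phi psi : R -> R -> R) (a b k t0 : R),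
  (forall z t, derivable_pt_lim (fun t => phi z t) t (psi z t)) ->
  JC phi -> JC psi ->
  derivable_pt_lim (fun t => RI (fun z => phi z t) a (b + k * t)) t0
     (k * phi (b + k * t0) t0 + RI (fun z => psi z t0) a (b + k * t0)).
Proof.
  intros phi psi a b k t0 HD Hphi Hpsi e He.
  set (B0 := b + k * t0).
  set (M := Rabs (B0 - a) + Rabs k + 1).
  assert (HM : 0 < M) by (unfold M; pose proof (Rabs_pos (B0 - a)); pose proof (Rabs_pos k); lra).
  set (e1 := e / (3 * M)).
  assert (He1 : 0 < e1) by (unfold e1; apply Rdiv_lt_0_compat; lra).
  set (A := Rmin a B0 - Rabs k - 1). set (B := Rmax a B0 + Rabs k + 1).
  assert (HAB : A <= B) by (unfold A, B; pose proof (Rmin_l a B0); pose proof (Rmax_l a B0); pose proof (Rabs_pos k); lra).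
  destruct (UE psi Hpsi A B t0 e1 HAB He1) as [d1 [Hd1 HU]].
  destruct (dpl_cont _ _ _ (FTC_aff (fun z => psi z t0) a b k t0 (JC_cont1 psi t0 Hpsi)) (e/3) ltac:(lra))
    as [d2 [Hd2 H2]].
  destruct (FTC_aff (fun z => phi z t0) a b k t0 (JC_cont1 phi t0 Hphi) (e/3) ltac:(lra)) as [d3 H3].
  assert (Hd : 0 < Rmin 1 (Rmin d1 (Rmin d2 d3))).
  { repeat apply Rmin_pos; try lra; auto. apply cond_pos. }
  exists (mkposreal _ Hd). intros h Hh0 Hh. simpl in Hh.
  assert (Hh1 : Rabs h < 1) by (eapply Rlt_le_trans; [exact Hh|apply Rmin_l]).
  assert (Hhd1 : Rabs h < d1) by (eapply Rlt_le_trans; [exact Hh|]; eapply Rle_trans; [apply Rmin_r|apply Rmin_l]).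
  assert (Hhd2 : Rabs h < d2) by (eapply Rlt_le_trans; [exact Hh|]; eapply Rle_trans; [apply Rmin_r|]; eapply Rle_trans; [apply Rmin_r|apply Rmin_l]).
  assert (Hhd3 : Rabs h < d3) by (eapply Rlt_le_trans; [exact Hh|]; eapply Rle_trans; [apply Rmin_r|]; eapply Rle_trans; [apply Rmin_r|apply Rmin_r]).
  specialize (H2 h Hhd2). specialize (H3 h Hh0 Hhd3).
  set (Bh := b + k * (t0 + h)) in *.
  set (F0 := fun z => phi z t0). set (Fh := fun z => phi z (t0 + h)). set (Ps := fun z => psi z t0).
  assert (CF0 : Cont F0) by apply JC_cont1, Hphi.
  assert (CFh : Cont Fh) by apply JC_cont1, Hphi.
  assert (CPs : Cont Ps) by apply JC_cont1, Hpsi.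
  set (G := fun z => (Fh z - F0 z) / h - Ps z).
  assert (CG : Cont G).
  { intro z. unfold G. apply continuity_pt_minus; auto. unfold Rdiv.
    apply continuity_pt_mult. apply continuity_pt_minus; auto. apply continuity_pt_const; intros u v; auto. }
  assert (Eq : RI G a Bh = / h * (RI Fh a Bh - RI F0 a Bh) - RI Ps a Bh).
  { unfold G. rewrite RI_minus; auto.
    2:{ intro z. unfold Rdiv. apply continuity_pt_mult. apply continuity_pt_minus; auto. apply continuity_pt_const; intros u v; auto. }
    replace (fun x => (Fh x - F0 x) / h) with (fun x => / h * (fun y => Fh y - F0 y) x)
      by (apply functional_extensionality; intros; unfold Rdiv; ring).
    rewrite RI_scal. rewrite RI_minus; auto. intro z; apply continuity_pt_minus; auto. }
  assert (BG : Rabs (RI G a Bh) <= e1 * Rabs (Bh - a)).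
  { apply RI_bound; auto. intros z Hz.
    assert (HzAB : A <= z <= B).
    { assert (Rabs (Bh - B0) <= Rabs k).
      { unfold Bh, B0. replace (b + k * (t0 + h) - (b + k * t0)) with (k * h) by ring.
        rewrite Rabs_mult. pose proof (Rabs_pos k). pose proof (Rabs_pos h). nra. }
      pose proof (RRle_abs (Bh - B0)) as Q1. pose proof (RRle_abs (-(Bh - B0))) as Q2. rewrite Rabs_Ropp in Q2. unfold A, B.
      pose proof (Rmin_l a Bh). pose proof (Rmin_r a Bh). pose proof (Rmax_l a Bh). pose proof (Rmax_r a Bh).
      pose proof (Rmin_l a B0). pose proof (Rmin_r a B0). pose proof (Rmax_l a B0). pose proof (Rmax_r a B0).
      destruct (Rle_dec a Bh); [rewrite Rmin_left, Rmax_right in Hz by lra|rewrite Rmin_right, Rmax_left in Hz by lra];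
      destruct (Rle_dec a B0); [rewrite Rmin_left, Rmax_right by lra| rewrite Rmin_right, Rmax_left by lra|rewrite Rmin_left, Rmax_right by lra| rewrite Rmin_right, Rmax_left by lra]; lra. }
    unfold G.
    assert (MV := mvt_bound (fun t => phi z t) (fun t => psi z t) t0 h e1 (HD z)).
    assert (Rabs (Fh z - F0 z - h * Ps z) <= e1 * Rabs h).
    { apply MV. intros s Hs. left. apply HU; auto. lra. }
    replace ((Fh z - F0 z) / h - Ps z) with ((Fh z - F0 z - h * Ps z) / h) by (field; auto).
    unfold Rdiv. rewrite Rabs_mult, Rabs_inv.
    assert (Rabs h > 0) by (apply Rabs_pos_lt; auto).
    apply Rmult_le_reg_r with (Rabs h); auto.
    rewrite Rmult_assoc, Rinv_l by lra. lra. }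
  assert (BM : Rabs (Bh - a) <= M).
  { unfold M, Bh, B0. replace (b + k * (t0 + h) - a) with ((b + k * t0 - a) + k * h) by ring.
    eapply Rle_trans. apply Rabs_triang. rewrite Rabs_mult.
    pose proof (Rabs_pos k). pose proof (Rabs_pos h). nra. }
  assert (BG' : Rabs (RI G a Bh) <= e / 3).
  { eapply Rle_trans. exact BG. replace (e/3) with (e1 * M) by (unfold e1; field; lra).
    apply Rmult_le_compat_l; lra. }
  fold B0 in H2, H3. fold F0 Ps in H2, H3. fold Bh in H2.
  replace ((RI Fh a Bh - RI F0 a B0) / h - (k * phi B0 t0 + RI Ps a B0))
    with (RI G a Bh + (RI Ps a Bh - RI Ps a B0) + ((RI F0 a Bh - RI F0 a B0) / h - k * F0 B0)).
  2:{ rewrite Eq. unfold F0. field. auto. }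
  eapply Rle_lt_trans. apply Rabs_triang.
  assert (Rabs (RI G a Bh + (RI Ps a Bh - RI Ps a B0)) < 2 * e / 3).
  { eapply Rle_lt_trans. apply Rabs_triang. lra. }
  unfold F0 at 3. lra.
  Unshelve. all: fail.
Qed.

Ltac pt_ext := apply functional_extensionality; let j := fresh "j" in intro j;
  cbv beta delta [shift path upd]; repeat (match goal with |- context [Nat.eqb ?x ?y] => destruct (Nat.eqb_spec x y) end); subst; try lia; try reflexivity; try ring.

Lemma upd_get : forall p i t, upd p i t i = t.
Proof. intros; unfold upd; rewrite Nat.eqb_refl; auto. Qed.
Lemma upd_other : forall p i t j, j <> i -> upd p i t j = p j.
Proof. intros; unfold upd; destruct (Nat.eqb_spec j i); auto; lia. Qed.
Lemma upd_upd : forall p i a b, upd (upd p i a) i b = upd p i b.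
Proof. intros. pt_ext. Qed.
Lemma upd_comm : forall p i j a b, i <> j -> upd (upd p i a) j b = upd (upd p j b) i a.
Proof. intros. pt_ext. Qed.
Lemma upd_self : forall p i, upd p i (p i) = p.
Proof. intros. pt_ext. Qed.

Lemma dep_upd : forall (S : nat -> Prop) F, depends_only_on S F -> forall c, ~ S c ->
  forall q t, F (upd q c t) = F q.
Proof.
  intros S F H c Hc q t. apply H. intros i Hi. unfold upd.
  destruct (Nat.eqb_spec i c); subst; tauto.
Qed.

Lemma pd_const : forall F c q, (forall t, F (upd q c t) = F q) -> has_pd F c q 0.
Proof.
  intros F c q H. unfold has_pd.
  replace (fun t => F (upd q c t)) with (fct_cte (F q)).
  apply derivable_pt_lim_const. apply functional_extensionality; intro; rewrite H; auto.
Qed.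

Lemma pd_dep_zero : forall (S : nat -> Prop) F c q, depends_only_on S F -> ~ S c -> has_pd F c q 0.
Proof. intros. apply pd_const. intros. eapply dep_upd; eauto. Qed.

Lemma pd_affine : forall F c q d (G : R -> R) al k t,
  has_pd F c q d -> (forall s, G s = F (upd q c (al + k * s))) -> al + k * t = q c ->
  derivable_pt_lim G t (k * d).
Proof.
  intros F c q d G al k t Hd HG Ht.
  replace G with (fun s => F (upd q c (al + k * s))) by (apply functional_extensionality; intro; rewrite HG; auto).
  rewrite Rmult_comm.
  apply (derivable_pt_lim_comp (fun s => al + k * s) (fun s => F (upd q c s))).
  apply dpl_affine. rewrite Ht. exact Hd.
Qed.

Lemma deriv_dep : forall (S : nat -> Prop) F c D, depends_only_on S F -> S c ->
  (forall q, has_pd F c q (D q)) -> depends_only_on S D.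
Proof.
  intros S F c D HF Hc HD q q' Hqq.
  assert (E : (fun t => F (upd q c t)) = (fun t => F (upd q' c t))).
  { apply functional_extensionality; intro t. apply HF. intros i Hi. unfold upd.
    destruct (Nat.eqb_spec i c); auto. }
  pose proof (HD q) as H1. pose proof (HD q') as H2. unfold has_pd in *.
  rewrite E in H1. rewrite <- (Hqq c Hc) in H2.
  eapply uniqueness_limite; eauto.
Qed.

Lemma smooth_cont : forall N F, smoothN N F -> contN N F.
Proof. intros N F H. exact (H 0%nat). Qed.

Lemma smooth_deriv : forall N F c D, smoothN N F -> (1 <= c <= N)%nat ->
  (forall p, has_pd F c p (D p)) -> smoothN N D.
Proof.
  intros N F c D HF Hc HD k. destruct (HF (S k)) as [_ Hk].
  destruct (Hk c Hc) as [g [Hg Hgk]].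
  replace D with g. auto.
  apply functional_extensionality; intro p. eapply uniqueness_limite; [apply Hg|apply HD].
Qed.

Lemma smooth_has : forall N F c, smoothN N F -> (1 <= c <= N)%nat ->
  exists D, (forall p, has_pd F c p (D p)) /\ smoothN N D.
Proof.
  intros N F c HF Hc. destruct (HF 1%nat) as [_ H1]. destruct (H1 c Hc) as [g [Hg _]].
  exists g; split; auto. eapply smooth_deriv; eauto.
Qed.

Lemma contN_lin : forall N f g l, contN N f -> contN N g -> contN N (fun q => f q + l * g q).
Proof.
  intros N f g l Hf Hg p e He.
  destruct (Hf p (e/2) ltac:(lra)) as [d1 [Hd1 H1]].
  destruct (Hg p (e/2 / (Rabs l + 1))) as [d2 [Hd2 H2]].
  { apply Rdiv_lt_0_compat. lra. pose proof (Rabs_pos l); lra. }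
  exists (Rmin d1 d2). split. apply Rmin_pos; auto.
  intros q Hq.
  assert (A1 := H1 q (fun i Hi => Rlt_le_trans _ _ _ (Hq i Hi) (Rmin_l _ _))).
  assert (A2 := H2 q (fun i Hi => Rlt_le_trans _ _ _ (Hq i Hi) (Rmin_r _ _))).
  replace (f q + l * g q - (f p + l * g p)) with ((f q - f p) + l * (g q - g p)) by ring.
  eapply Rle_lt_trans. apply Rabs_triang. rewrite Rabs_mult.
  assert (Rabs l * Rabs (g q - g p) <= e/2).
  { pose proof (Rabs_pos l). pose proof (Rabs_pos (g q - g p)).
    assert (Rabs (g q - g p) * (Rabs l + 1) < e/2).
    { apply (Rmult_lt_compat_r (Rabs l + 1)) in A2; [|lra]. field_simplify in A2; [|lra]. lra. }
    nra. }
  lra.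
Qed.

Lemma JC_comp : forall N (D : Point -> R) (Q : R -> R -> Point) K, contN N D -> 0 < K ->
  (forall z t z' t' i, (1 <= i <= N)%nat -> Rabs (Q z' t' i - Q z t i) <= K * (Rabs (z' - z) + Rabs (t' - t))) ->
  JC (fun z t => D (Q z t)).
Proof.
  intros N D Q K HD HK HQ z t e He.
  destruct (HD (Q z t) e He) as [d [Hd Hx]].
  exists (d / (2 * K + 2)). split. apply Rdiv_lt_0_compat; lra.
  intros z' t' Hz Ht. apply Hx. intros i Hi.
  eapply Rle_lt_trans. apply HQ; auto.
  assert (Rabs (z' - z) + Rabs (t' - t) < 2 * (d / (2 * K + 2))) by lra.
  apply Rle_lt_trans with (K * (2 * (d / (2 * K + 2)))).
  apply Rmult_le_compat_l; lra.
  replace (K * (2 * (d / (2 * K + 2)))) with (d * (K / (K + 1))) by (field; lra).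
  assert (K / (K+1) < 1). { apply Rmult_lt_reg_r with (K+1). lra. field_simplify; lra. }
  nra.
Qed.

Lemma fold_zero : forall (F : nat -> R) l, (forall x, In x l -> F x = 0) ->
  fold_right Rplus 0 (map F l) = 0.
Proof.
  induction l; simpl; intros; auto. rewrite H, IHl; auto. ring.
Qed.

Lemma sumN_3 : forall N F, (3 <= N)%nat -> (forall c, (4 <= c <= N)%nat -> F c = 0) ->
  sumN N F = F 1%nat + F 2%nat + F 3%nat.
Proof.
  intros N F HN HF. unfold sumN.
  replace N with (S (S (S (N - 3)))) by lia. simpl.
  rewrite fold_zero. ring. intros x Hx. apply in_seq in Hx. apply HF. lia.
Qed.

Lemma fold_pd : forall (f : nat -> R -> R) x l,
  (forall i, In i l -> exists d, derivable_pt_lim (f i) x d) ->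
  exists d, derivable_pt_lim (fun t => fold_right Rplus 0 (map (fun i => f i t) l)) x d.
Proof.
  induction l; simpl; intros H.
  - exists 0. apply (derivable_pt_lim_const 0).
  - destruct (H a (or_introl eq_refl)) as [d1 H1].
    destruct IHl as [d2 H2]. intros; apply H; auto.
    exists (d1 + d2). apply (derivable_pt_lim_plus (f a) _ x d1 d2 H1 H2).
Qed.

Lemma shift_upd_other : forall eps p c t, c <> 1%nat -> c <> 3%nat ->
  shift eps (upd p c t) = upd (shift eps p) c t.
Proof. intros. pt_ext. Qed.

Lemma shift_other : forall eps G p c d, c <> 1%nat -> c <> 3%nat ->
  has_pd G c (shift eps p) d -> has_pd (fun q => G (shift eps q)) c p d.
Proof.
  intros eps G p c d H1 H3 Hd. unfold has_pd in *.
  replace (fun t => G (shift eps (upd p c t))) with (fun t => G (upd (shift eps p) c t)).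
  replace (p c) with (shift eps p c). auto.
  unfold shift; rewrite upd_other; auto.
  apply functional_extensionality; intro t; rewrite shift_upd_other; auto.
Qed.

Lemma shift_3 : forall eps G p d,
  has_pd G 3 (shift eps p) d -> has_pd (fun q => G (shift eps q)) 3 p d.
Proof.
  intros eps G p d Hd. unfold has_pd. rewrite <- (Rmult_1_l d).
  eapply (pd_affine G 3 (shift eps p) d _ (- eps * p 1%nat) 1); auto.
  - intro s. f_equal. pt_ext.
  - unfold shift. rewrite upd_get. ring.
Qed.

Lemma shift_1 : forall (S : nat -> Prop) eps G p d, depends_only_on S G -> ~ S 1%nat ->
  has_pd G 3 (shift eps p) d -> has_pd (fun q => G (shift eps q)) 1 p (- eps * d).
Proof.
  intros S eps G p d HG HS Hd. unfold has_pd.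
  eapply (pd_affine G 3 (shift eps p) d _ (p 3%nat) (- eps)); auto.
  - intro s. rewrite <- (dep_upd S G HG 1 HS (upd (shift eps p) 3 (p 3%nat + - eps * s)) s). f_equal. pt_ext.
  - unfold shift. rewrite upd_get. ring.
Qed.

Lemma shift_all : forall N eps G p, (3 <= N)%nat ->
  depends_only_on (fun j => (3 <= j <= N)%nat) G ->
  (forall c q, (1 <= c <= N)%nat -> exists d, has_pd G c q d) ->
  exists d3, has_pd (fun q => G (shift eps q)) 1 p (- eps * d3) /\
    has_pd (fun q => G (shift eps q)) 2 p 0 /\
    has_pd (fun q => G (shift eps q)) 3 p d3 /\
    forall c, (1 <= c <= N)%nat -> exists d, has_pd (fun q => G (shift eps q)) c p d.
Proof.
  intros N eps G p HN HG Hpd.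
  destruct (Hpd 3%nat (shift eps p) ltac:(lia)) as [d3 H3].
  exists d3. split; [|split; [|split]].
  - eapply shift_1; eauto. cbv beta; lia.
  - apply shift_other; try lia. eapply pd_dep_zero; eauto. cbv beta; lia.
  - apply shift_3; auto.
  - intros c Hc. destruct (Nat.eq_dec c 1); [subst; eexists; eapply shift_1; eauto; cbv beta; lia|].
    destruct (Nat.eq_dec c 3); [subst; eexists; apply shift_3; eauto|].
    destruct (Hpd c (shift eps p) Hc) as [d Hd]. exists d. apply shift_other; auto.
Qed.

Lemma pd_ext : forall F G c p d, (forall q, F q = G q) -> has_pd F c p d -> has_pd G c p d.
Proof.
  intros. replace G with F; auto. apply functional_extensionality; auto.
Qed.

Lemma pd_lin : forall A B k c p a b, has_pd A c p a -> has_pd B c p b ->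
  has_pd (fun q => A q + k * B q) c p (a + k * b).
Proof.
  intros. unfold has_pd in *.
  apply (derivable_pt_lim_plus (fun t => A (upd p c t)) (fun t => k * B (upd p c t))); auto.
  apply (derivable_pt_lim_scal (fun t => B (upd p c t))); auto.
Qed.

Lemma pd_opp : forall A c p a, has_pd A c p a -> has_pd (fun q => - A q) c p (- a).
Proof.
  intros. unfold has_pd in *.
  apply (derivable_pt_lim_opp (fun t => A (upd p c t))); auto.
Qed.

Lemma pd_mult : forall A B c p a b, has_pd A c p a -> has_pd B c p b ->
  has_pd (fun q => A q * B q) c p (a * B p + A p * b).
Proof.
  intros. unfold has_pd in *.
  pose proof (derivable_pt_lim_mult (fun t => A (upd p c t)) (fun t => B (upd p c t)) _ _ _ H H0) as H1.
  cbv beta in H1. rewrite upd_self in H1. exact H1.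
Qed.

Lemma choose_pd : forall N F p, (forall c, (1 <= c <= N)%nat -> exists d, has_pd F c p d) ->
  exists D : nat -> R, forall c, (1 <= c <= N)%nat -> has_pd F c p (D c).
Proof.
  intros N F p H.
  exists (fun c => match excluded_middle_informative (exists d, has_pd F c p d) with
           | left e => proj1_sig (constructive_indefinite_description _ e)
           | right _ => 0 end).
  intros c Hc. destruct (excluded_middle_informative _) as [e|n].
  - exact (proj2_sig (constructive_indefinite_description _ e)).
  - exfalso; apply n; auto.
Qed.

Lemma contN_const : forall N c, contN N (fun _ => c).
Proof. intros N c p e He. exists 1; split; [lra|]. intros. unfold Rminus; rewrite Rplus_opp_r, Rabs_R0; auto. Qed.

Lemma contN_scal : forall N f k, contN N f -> contN N (fun q => k * f q).
Proof.
  intros. pose proof (contN_lin N (fun _ => 0) f k (contN_const N 0) H).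
  intros p e He. destruct (H0 p e He) as [d [Hd Hx]]. exists d; split; auto.
  intros q Hq. specialize (Hx q Hq). rewrite !Rplus_0_l in Hx. auto.
Qed.

Lemma lip_aux : forall e al be dz dt K, e = al * dz + be * dt -> Rabs al <= K -> Rabs be <= K ->
  Rabs e <= K * (Rabs dz + Rabs dt).
Proof.
  intros. subst. eapply Rle_trans. apply Rabs_triang. rewrite !Rabs_mult.
  pose proof (Rabs_pos dz). pose proof (Rabs_pos dt). nra.
Qed.

Lemma lipK : forall eps, Rabs 0 <= 1 + Rabs eps /\ Rabs 1 <= 1 + Rabs eps /\
  Rabs eps <= 1 + Rabs eps /\ Rabs (- eps) <= 1 + Rabs eps.
Proof.
  intros. rewrite Rabs_R0, Rabs_R1, Rabs_Ropp. pose proof (Rabs_pos eps). lra.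
Qed.

Ltac lip eps :=
  let H := fresh in pose proof (lipK eps) as H; destruct H as [? [? [? ?]]];
  first [ apply (lip_aux _ 0 0); [ring|assumption|assumption]
        | apply (lip_aux _ 1 0); [ring|assumption|assumption]
        | apply (lip_aux _ 0 1); [ring|assumption|assumption]
        | apply (lip_aux _ eps 0); [ring|assumption|assumption]
        | apply (lip_aux _ eps (-eps)); [ring|assumption|assumption]
        | apply (lip_aux _ eps 1); [ring|assumption|assumption] ].

Ltac lip_goal eps :=
  intros ? ? ? ? ?i ?Hi; cbv beta delta [shift path upd];
  repeat (match goal with |- context [Nat.eqb ?x ?y] => destruct (Nat.eqb_spec x y) end);
  subst; try lia; lip eps.

Lemma leib_point : forall N (L DL : Point -> R) (Q : R -> R -> Point) c kk a b k t0 K,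
  contN N L -> contN N DL -> 0 < K ->
  (forall q, has_pd L c q (DL q)) ->
  (forall z t s, Q z s = upd (Q z t) c (Q z t c - kk * t + kk * s)) ->
  (forall z t z' t' i, (1 <= i <= N)%nat -> Rabs (Q z' t' i - Q z t i) <= K * (Rabs (z' - z) + Rabs (t' - t))) ->
  derivable_pt_lim (fun t => RI (fun z => L (Q z t)) a (b + k * t)) t0
     (k * L (Q (b + k * t0) t0) + RI (fun z => kk * DL (Q z t0)) a (b + k * t0)).
Proof.
  intros N L DL Q c kk a b k t0 K HL HDL HK Hpd HQ Hlip.
  apply (leibniz (fun z t => L (Q z t)) (fun z t => kk * DL (Q z t))).
  - intros z t. eapply (pd_affine L c (Q z t) (DL (Q z t)) _ (Q z t c - kk * t) kk).
    + apply Hpd.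
    + intro s. cbv beta. rewrite (HQ z t s). reflexivity.
    + ring.
  - eapply JC_comp; eauto.
  - apply (JC_comp N (fun q => kk * DL q) Q K); auto. apply contN_scal; auto.
Qed.

Lemma cont_path : forall N (D : Point -> R) eps p, contN N D -> Cont (fun z => D (path eps p z)).
Proof.
  intros. apply (JC_cont1 (fun z t => D (path eps p z)) 0).
  apply (JC_comp N D (fun z t => path eps p z) (1 + Rabs eps)); auto.
  pose proof (Rabs_pos eps); lra.
  lip_goal eps.
Qed.

Lemma Wn_facts : forall N eps u0 (Wn L E : Point -> R) p,
  (3 <= N)%nat -> contN N L ->
  (forall c, (1 <= c <= N)%nat -> exists DL, (forall q, has_pd L c q (DL q)) /\ contN N DL) ->
  (forall q t, L (upd q 2 t) = L q) ->
  depends_only_on (fun j => (3 <= j <= N)%nat) E ->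
  (forall c q, (1 <= c <= N)%nat -> exists d, has_pd E c q d) ->
  (forall q, Wn q = RI (fun z => L (path eps q z)) u0 (q 1%nat) + E (shift eps q)) ->
  exists v1 v3, has_pd Wn 1 p v1 /\ has_pd Wn 2 p 0 /\ has_pd Wn 3 p v3 /\
    v1 + eps * v3 = L p /\ forall c, (1 <= c <= N)%nat -> exists d, has_pd Wn c p d.
Proof.
  intros N eps u0 Wn L E p HN HL HDL HL2 HEdep HEpd HW.
  assert (HK : 0 < 1 + Rabs eps) by (pose proof (Rabs_pos eps); lra).
  destruct (HDL 3%nat ltac:(lia)) as [DL3 [HDL3 CDL3]].
  destruct (shift_all N eps E p HN HEdep HEpd) as [e3 [HE1 [HE2 [HE3 HEall]]]].
  set (Q1 := fun z t => upd (upd p 1 z) 3 (p 3%nat + eps * z + (- eps) * t)).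
  set (Q3 := fun z t => upd (upd p 1 z) 3 (t - eps * p 1%nat + eps * z)).
  assert (L1 := leib_point N L DL3 Q1 3 (- eps) u0 0 1 (p 1%nat) (1 + Rabs eps) HL CDL3 HK HDL3
     ltac:(intros; unfold Q1; pt_ext) ltac:(unfold Q1; lip_goal eps)).
  assert (L3 := leib_point N L DL3 Q3 3 1 u0 (p 1%nat) 0 (p 3%nat) (1 + Rabs eps) HL CDL3 HK HDL3
     ltac:(intros; unfold Q3; pt_ext) ltac:(unfold Q3; lip_goal eps)).
  set (I := RI (fun z => DL3 (path eps p z)) u0 (p 1%nat)).
  assert (EQ1 : (fun z => - eps * DL3 (Q1 z (p 1%nat))) = (fun z => - eps * DL3 (path eps p z))).
  { apply functional_extensionality; intro z. replace (Q1 z (p 1%nat)) with (path eps p z) by (unfold Q1; pt_ext); reflexivity. }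
  assert (EQ3 : (fun z => 1 * DL3 (Q3 z (p 3%nat))) = (fun z => 1 * DL3 (path eps p z))).
  { apply functional_extensionality; intro z. replace (Q3 z (p 3%nat)) with (path eps p z) by (unfold Q3; pt_ext); reflexivity. }
  rewrite EQ1, RI_scal in L1 by (eapply cont_path; eauto).
  rewrite EQ3, RI_scal in L3 by (eapply cont_path; eauto).
  replace (0 + 1 * p 1%nat) with (p 1%nat) in L1 by ring.
  replace (p 1%nat + 0 * p 3%nat) with (p 1%nat) in L3 by ring.
  replace (Q1 (p 1%nat) (p 1%nat)) with p in L1 by (unfold Q1; pt_ext).
  fold I in L1, L3.
  exists (1 * L p + - eps * I + - eps * e3), (0 * L (Q3 (p 1%nat) (p 3%nat)) + 1 * I + e3).
  assert (P1 : has_pd Wn 1 p (1 * L p + - eps * I + - eps * e3)).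
  { unfold has_pd.
    replace (fun t => Wn (upd p 1 t)) with
      (fun t => RI (fun z => L (Q1 z t)) u0 (0 + 1 * t) + E (shift eps (upd p 1 t))).
    apply (derivable_pt_lim_plus (fun t => RI (fun z => L (Q1 z t)) u0 (0 + 1 * t))
                                 (fun t => E (shift eps (upd p 1 t)))); auto.
    apply functional_extensionality; intro t. rewrite HW. f_equal.
    replace (0 + 1 * t) with (upd p 1 t 1%nat) by (rewrite upd_get; ring).
    f_equal. apply functional_extensionality; intro z. f_equal. unfold Q1. pt_ext. }
  assert (P3 : has_pd Wn 3 p (0 * L (Q3 (p 1%nat) (p 3%nat)) + 1 * I + e3)).
  { unfold has_pd.
    replace (fun t => Wn (upd p 3 t)) with
      (fun t => RI (fun z => L (Q3 z t)) u0 (p 1%nat + 0 * t) + E (shift eps (upd p 3 t))).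
    apply (derivable_pt_lim_plus (fun t => RI (fun z => L (Q3 z t)) u0 (p 1%nat + 0 * t))
                                 (fun t => E (shift eps (upd p 3 t)))); auto.
    apply functional_extensionality; intro t. rewrite HW. f_equal.
    replace (p 1%nat + 0 * t) with (upd p 3 t 1%nat) by (rewrite upd_other by lia; ring).
    f_equal. apply functional_extensionality; intro z. f_equal. unfold Q3. pt_ext. }
  assert (P2 : has_pd Wn 2 p 0).
  { apply pd_const. intro t. rewrite !HW. f_equal.
    - rewrite upd_other by lia. f_equal. apply functional_extensionality; intro z.
      replace (path eps (upd p 2 t) z) with (upd (path eps p z) 2 t) by pt_ext. apply HL2.
    - rewrite shift_upd_other by lia. eapply dep_upd; eauto. cbv beta; lia. }
  split; [exact P1|]. split; [exact P2|]. split; [exact P3|]. split; [ring|].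
  intros c Hc.
  destruct (Nat.eq_dec c 1); [subst; eauto|].
  destruct (Nat.eq_dec c 2); [subst; eauto|].
  destruct (Nat.eq_dec c 3); [subst; eauto|].
  destruct (HDL c Hc) as [DLc [HDLc CDLc]].
  set (Qc := fun z t => upd (path eps p z) c t).
  assert (Lc := leib_point N L DLc Qc c 1 u0 (p 1%nat) 0 (p c) (1 + Rabs eps) HL CDLc HK HDLc
     ltac:(intros; unfold Qc; pt_ext) ltac:(unfold Qc; lip_goal eps)).
  destruct (HEall c Hc) as [ec Hec].
  eexists. unfold has_pd.
  replace (fun t => Wn (upd p c t)) with
      (fun t => RI (fun z => L (Qc z t)) u0 (p 1%nat + 0 * t) + E (shift eps (upd p c t))).
  apply (derivable_pt_lim_plus (fun t => RI (fun z => L (Qc z t)) u0 (p 1%nat + 0 * t))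
                               (fun t => E (shift eps (upd p c t)))); eauto.
  apply functional_extensionality; intro t. rewrite HW. f_equal.
  replace (p 1%nat + 0 * t) with (upd p c t 1%nat) by (rewrite upd_other by lia; ring).
  f_equal. apply functional_extensionality; intro z. f_equal. unfold Qc. pt_ext.
Qed.

Ltac gsimp := unfold gmet;
  repeat (match goal with
          | |- context [Nat.eqb ?x ?y] => destruct (Nat.eqb_spec x y)
          | |- context [Nat.leb ?x ?y] => destruct (Nat.leb_spec0 x y)
          end); simpl; try lia; try reflexivity.

Lemma g11 : forall (N : nat) (H : Point -> R) (W : nat -> Point -> R) (m : nat -> nat -> Point -> R) q, gmet N H W m 1 1 q = 2 * H q. Proof. intros; gsimp. Qed.
Lemma g12 : forall (N : nat) (H : Point -> R) (W : nat -> Point -> R) (m : nat -> nat -> Point -> R) q, gmet N H W m 1 2 q = 1. Proof. intros; gsimp. Qed.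
Lemma g21 : forall (N : nat) (H : Point -> R) (W : nat -> Point -> R) (m : nat -> nat -> Point -> R) q, gmet N H W m 2 1 q = 1. Proof. intros; gsimp. Qed.
Lemma g22 : forall (N : nat) (H : Point -> R) (W : nat -> Point -> R) (m : nat -> nat -> Point -> R) q, gmet N H W m 2 2 q = 0. Proof. intros; gsimp. Qed.
Lemma g1b : forall (N : nat) (H : Point -> R) (W : nat -> Point -> R) (m : nat -> nat -> Point -> R) b q, (3 <= b <= N)%nat -> gmet N H W m 1 b q = W b q. Proof. intros; gsimp. Qed.
Lemma gb1 : forall (N : nat) (H : Point -> R) (W : nat -> Point -> R) (m : nat -> nat -> Point -> R) a q, (3 <= a <= N)%nat -> gmet N H W m a 1 q = W a q. Proof. intros; gsimp. Qed.
Lemma g2b : forall (N : nat) (H : Point -> R) (W : nat -> Point -> R) (m : nat -> nat -> Point -> R) b q, (3 <= b)%nat -> gmet N H W m 2 b q = 0. Proof. intros; gsimp. Qed.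
Lemma ga2 : forall (N : nat) (H : Point -> R) (W : nat -> Point -> R) (m : nat -> nat -> Point -> R) a q, (3 <= a <= N)%nat -> gmet N H W m a 2 q = 0. Proof. intros; gsimp. Qed.
Lemma gab : forall (N : nat) (H : Point -> R) (W : nat -> Point -> R) (m : nat -> nat -> Point -> R) a b q, (3 <= a <= N)%nat -> (3 <= b <= N)%nat ->
  gmet N H W m a b q = fold_right Rplus 0 (map (fun i => m i a q * m i b q) (seq 3 (N - 2))).
Proof. intros; gsimp. Qed.
Lemma g2x : forall (N : nat) (H : Point -> R) (W : nat -> Point -> R) (m : nat -> nat -> Point -> R) b q, (1 <= b <= N)%nat -> gmet N H W m 2 b q = if Nat.eqb b 1 then 1 else 0.
Proof. intros; gsimp. Qed.
Lemma gx2 : forall (N : nat) (H : Point -> R) (W : nat -> Point -> R) (m : nat -> nat -> Point -> R) a q, (1 <= a <= N)%nat -> gmet N H W m a 2 q = if Nat.eqb a 1 then 1 else 0.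
Proof. intros; gsimp. Qed.

Lemma pd_val : forall F c p d d', has_pd F c p d -> d = d' -> has_pd F c p d'.
Proof. intros; subst; auto. Qed.

Lemma pd_scal : forall A k c p a, has_pd A c p a -> has_pd (fun q => k * A q) c p (k * a).
Proof.
  intros. unfold has_pd in *. apply (derivable_pt_lim_scal (fun t => A (upd p c t))); auto.
Qed.

Lemma pd_uniq : forall F c p d1 d2, has_pd F c p d1 -> has_pd F c p d2 -> d1 = d2.
Proof. intros. eapply uniqueness_limite; eauto. Qed.

Lemma contN_ext : forall N F G, (forall q, F q = G q) -> contN N F -> contN N G.
Proof. intros. replace G with F; auto. apply functional_extensionality; auto. Qed.

Theorem mainTheorem5
  (N : nat) (eps : R)
  (* mt i e : the function tilde-m^i_e of (y^3,...,y^N) = (x^3 - eps u, x^4, ..., x^N) *)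
  (mt : nat -> nat -> Point -> R)
  (H : Point -> R)                 (* H(u, x^3..x^N) *)
  (F2t : Point -> R)               (* F_2 as a function of (y^3..y^N) *)
  (Et : nat -> Point -> R)         (* E_n as functions of (y^3..y^N) *)
  (f : Point -> R)                 (* f(x^3..x^N) *)
  (Phi : Point -> R)               (* Phi(u, x^3..x^N) *)
  (u0 : R)
  (W : nat -> Point -> R)          (* W-hat_e *)
  (dH dPhi df : nat -> Point -> R) (* names for the partial derivatives d_n H, d_n Phi, d_n f *)
  (HN : (3 <= N)%nat)
  (Heps : eps <> 0)
  (Hmt_dep : forall i e, (3 <= i <= N)%nat -> (3 <= e <= N)%nat ->
     depends_only_on (fun j => (3 <= j <= N)%nat) (mt i e))
  (Hmt_smooth : forall i e, (3 <= i)%nat -> (i <= e)%nat -> (e <= N)%nat ->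
     smoothN N (mt i e))
  (Hmt_zero : forall i e, (3 <= e)%nat -> (e < i)%nat -> (i <= N)%nat ->
     forall y, mt i e y = 0)
  (Hmt_pos : forall i, (3 <= i <= N)%nat -> forall y, 0 < mt i i y)
  (HH_dep : depends_only_on (fun j => j = 1%nat \/ (3 <= j <= N)%nat) H)
  (HH_smooth : smoothN N H)
  (HF2_dep : depends_only_on (fun j => (3 <= j <= N)%nat) F2t)
  (HF2_smooth : smoothN N F2t)
  (HE_dep : forall n, (4 <= n <= N)%nat ->
     depends_only_on (fun j => (3 <= j <= N)%nat) (Et n))
  (HE_smooth : forall n, (4 <= n <= N)%nat -> smoothN N (Et n))
  (Hf_dep : depends_only_on (fun j => (3 <= j <= N)%nat) f)
  (Hf_smooth : smoothN N f)
  (HPhi_dep : depends_only_on (fun j => j = 1%nat \/ (3 <= j <= N)%nat) Phi)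
  (HPhi_smooth : smoothN N Phi)
  (HPhi_u : forall p, exists d, has_pd Phi 1 p d /\ has_pd H 3 p d)
  (HdH : forall n p, (4 <= n <= N)%nat -> has_pd H n p (dH n p))
  (HdPhi : forall n p, (4 <= n <= N)%nat -> has_pd Phi n p (dPhi n p))
  (Hdf : forall n p, (4 <= n <= N)%nat -> has_pd f n p (df n p))
  (HW3 : forall p, W 3%nat p = Phi p + / eps * (F2t (shift eps p) + f p))
  (HWn : forall n p, (4 <= n <= N)%nat ->
     exists pr : Riemann_integrable
                   (fun z => dH n (path eps p z) + eps * dPhi n (path eps p z)
                             + df n (path eps p z)) u0 (p 1%nat),
       W n p = RiemannInt pr + Et n (shift eps p)) :
  let m := fun i e p => mt i e (shift eps p) in
  let m33 := m 3%nat 3%nat in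
  let F2 := fun p => F2t (shift eps p) in
  let g := gmet N H W m in
  let X := fun p c => nvec H p c + F2 p * ellv p c + eps * m33 p * m3vec m33 (W 3%nat) p c in
  killing N g X /\
  (forall p, gform N g p (X p) (X p) = 2 * F2 p + eps ^ 2 * (m33 p) ^ 2) /\
  ((forall p, F2 p <= - (1/2) * eps ^ 2 * (m33 p) ^ 2) ->
     forall p, gform N g p (X p) (X p) <= 0).
Proof.
  intros m m33 F2 g X.
  set (Y := fun q => - (H q + eps * Phi q + f q)).
  assert (Hm33 : forall q, 0 < m33 q).
  { intro q. unfold m33, m. apply Hmt_pos. lia. }
  assert (HXc : forall q c, X q c = if Nat.eqb c 1 then 1 else if Nat.eqb c 2 then Y q
                                    else if Nat.eqb c 3 then eps else 0).
  { intros q c. unfold X, nvec, ellv, m3vec, kdelta. rewrite HW3.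
    pose proof (Hm33 q). unfold Y, F2.
    destruct (Nat.eqb_spec c 1); [subst; simpl; field; lra|].
    destruct (Nat.eqb_spec c 2); [subst; simpl; field; split; lra|].
    destruct (Nat.eqb_spec c 3); [subst; simpl; field; lra|].
    field; lra. }
  assert (HX0 : forall q c, (4 <= c)%nat -> X q c = 0).
  { intros q c Hc. rewrite HXc. destruct (Nat.eqb_spec c 1); [lia|].
    destruct (Nat.eqb_spec c 2); [lia|]. destruct (Nat.eqb_spec c 3); [lia|]. auto. }
  assert (HX1 : forall q, X q 1%nat = 1) by (intro; rewrite HXc; reflexivity).
  assert (HX2 : forall q, X q 2%nat = Y q) by (intro; rewrite HXc; reflexivity).
  assert (HX3 : forall q, X q 3%nat = eps) by (intro; rewrite HXc; reflexivity).
  assert (Hg33 : forall q, g 3%nat 3%nat q = m33 q ^ 2).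
  { intro q. unfold g. rewrite gab by lia. replace (N - 2)%nat with (S (N - 3)) by lia.
    simpl. rewrite fold_zero. unfold m33. ring.
    intros i Hi. apply in_seq in Hi. unfold m. rewrite (Hmt_zero i 3%nat); try lia. ring. }
  assert (GF : forall p, gform N g p (X p) (X p) = 2 * F2 p + eps ^ 2 * (m33 p) ^ 2).
  { intro p. unfold gform.
    rewrite (sumN_3 N); auto.
    2:{ intros c Hc. unfold sumN. apply fold_zero. intros x _. rewrite (HX0 p c) by lia. ring. }
    rewrite !(sumN_3 N) by (auto; intros c Hc; rewrite (HX0 p c) by lia; ring).
    rewrite HX1, HX2, HX3, Hg33. unfold g.
    rewrite g11, g12, g21, g22, (g1b N) , (gb1 N), (g2b N), (ga2 N) by lia.
    rewrite HW3. unfold Y, F2. field. auto. }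
  split; [|split; [exact GF|]].
  2:{ intros Hneg p. rewrite GF. specialize (Hneg p). lra. }

  intros p a b Ha Hb.
  destruct (HPhi_u p) as [d [HPu HH3]].
  destruct (smooth_has N H 1 HH_smooth ltac:(lia)) as [DH1 [HDH1 _]].
  destruct (smooth_has N Phi 3 HPhi_smooth ltac:(lia)) as [DPhi3 [HDPhi3 _]].
  destruct (smooth_has N f 3 Hf_smooth ltac:(lia)) as [Df3 [HDf3 _]].
  assert (Hf1 : has_pd f 1 p 0) by (eapply pd_dep_zero; [exact Hf_dep|cbv beta; lia]).
  assert (Hf2 : has_pd f 2 p 0) by (eapply pd_dep_zero; [exact Hf_dep|cbv beta; lia]).
  assert (HH2 : has_pd H 2 p 0) by (eapply pd_dep_zero; [exact HH_dep|cbv beta; lia]).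
  assert (HPhi2 : has_pd Phi 2 p 0) by (eapply pd_dep_zero; [exact HPhi_dep|cbv beta; lia]).
  assert (pdY : forall c x y z, has_pd H c p x -> has_pd Phi c p y -> has_pd f c p z ->
            has_pd Y c p (-(x + eps * y + z))).
  { intros c x y z Hx Hy Hz. unfold Y.
    apply pd_opp with (A := fun q => H q + eps * Phi q + f q).
    apply pd_ext with (F := fun q => (H q + eps * Phi q) + 1 * f q); [intro; ring|].
    eapply pd_val. apply (pd_lin (fun q => H q + eps * Phi q) f). apply pd_lin; eauto. eauto. ring. }
  assert (Y1 : has_pd Y 1 p (-(DH1 p + eps * d + 0))) by (apply pdY; auto).
  assert (Y2 : has_pd Y 2 p (-(0 + eps * 0 + 0))) by (apply pdY; auto).
  assert (Y3 : has_pd Y 3 p (-(d + eps * DPhi3 p + Df3 p))) by (apply pdY; auto).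
  assert (Yn : forall n, (4 <= n <= N)%nat -> has_pd Y n p (-(dH n p + eps * dPhi n p + df n p)))
    by (intros; apply pdY; auto).
  assert (Yall : forall c, (1 <= c <= N)%nat -> exists dy, has_pd Y c p dy).
  { intros c Hc.
    destruct (smooth_has N H c HH_smooth Hc) as [A1 [HA1 _]].
    destruct (smooth_has N Phi c HPhi_smooth Hc) as [A2 [HA2 _]].
    destruct (smooth_has N f c Hf_smooth Hc) as [A3 [HA3 _]].
    eexists; apply pdY; eauto. }
  destruct (Yall a Ha) as [dya Hya]. destruct (Yall b Hb) as [dyb Hyb].
  assert (W3F : exists v1 v2 v3, has_pd (W 3%nat) 1 p v1 /\ has_pd (W 3%nat) 2 p v2 /\
      has_pd (W 3%nat) 3 p v3 /\ (forall c, (1 <= c <= N)%nat -> exists dd, has_pd (W 3%nat) c p dd) /\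
      v1 + Y p * v2 + eps * v3 + (-(d + eps * DPhi3 p + Df3 p)) = 0).
  { destruct (shift_all N eps F2t p HN HF2_dep) as [dF3 [F1 [F2' [F3 Fall]]]].
    { intros c q Hc. destruct (smooth_has N F2t c HF2_smooth Hc) as [D [HD _]]. eauto. }
    assert (TR : forall c v, has_pd (fun q => Phi q + / eps * (F2t (shift eps q) + 1 * f q)) c p v ->
                 has_pd (W 3%nat) c p v).
    { intros c v Hv. eapply pd_ext; [|exact Hv]. intro q. rewrite HW3. ring. }
    assert (LIN : forall c x y z, has_pd Phi c p x -> has_pd (fun q => F2t (shift eps q)) c p y ->
                 has_pd f c p z -> has_pd (W 3%nat) c p (x + / eps * (y + 1 * z))).
    { intros c x y z Hx Hy Hz. apply TR.
      apply (pd_lin Phi (fun q => F2t (shift eps q) + 1 * f q)); auto.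
      apply (pd_lin (fun q => F2t (shift eps q)) f); auto. }
    exists (d + / eps * (- eps * dF3 + 1 * 0)), (0 + / eps * (0 + 1 * 0)),
           (DPhi3 p + / eps * (dF3 + 1 * Df3 p)).
    split; [apply LIN; auto|]. split; [apply LIN; auto|]. split; [apply LIN; auto|].
    split.
    - intros c Hc. destruct (smooth_has N Phi c HPhi_smooth Hc) as [A1 [HA1 _]].
      destruct (Fall c Hc) as [A2 HA2].
      destruct (smooth_has N f c Hf_smooth Hc) as [A3 [HA3 _]].
      eexists; apply LIN; eauto.
    - field. auto. }
  assert (WnF : forall n, (4 <= n <= N)%nat -> exists v1 v3, has_pd (W n) 1 p v1 /\
      has_pd (W n) 2 p 0 /\ has_pd (W n) 3 p v3 /\
      (forall c, (1 <= c <= N)%nat -> exists dd, has_pd (W n) c p dd) /\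
      v1 + eps * v3 - (dH n p + eps * dPhi n p + df n p) = 0).
  { intros n Hn.
    assert (SA : smoothN N (dH n)) by (apply (smooth_deriv N H n); auto; lia).
    assert (SB : smoothN N (dPhi n)) by (apply (smooth_deriv N Phi n); auto; lia).
    assert (SC : smoothN N (df n)) by (apply (smooth_deriv N f n); auto; lia).
    set (L := fun q => dH n q + eps * dPhi n q + df n q).
    assert (LIN : forall (A B C : Point -> R), contN N A -> contN N B -> contN N C ->
               contN N (fun q => A q + eps * B q + C q)).
    { intros A B C HA HB HC. eapply contN_ext; [|apply (contN_lin N (fun q => A q + eps * B q) C 1)].
      intro; simpl; ring. apply contN_lin; auto. auto. }
    destruct (Wn_facts N eps u0 (W n) L (Et n) p HN) as [v1 [v3 [P1 [P2 [P3 [Pid Pall]]]]]].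
    - apply LIN; apply smooth_cont; auto.
    - intros c Hc.
      destruct (smooth_has N (dH n) c SA Hc) as [A1 [HA1 SA1]].
      destruct (smooth_has N (dPhi n) c SB Hc) as [A2 [HA2 SA2]].
      destruct (smooth_has N (df n) c SC Hc) as [A3 [HA3 SA3]].
      exists (fun q => A1 q + eps * A2 q + A3 q). split.
      + intro q. eapply pd_ext with (F := fun q => (dH n q + eps * dPhi n q) + 1 * df n q).
        intro; unfold L; ring.
        eapply pd_val. apply (pd_lin (fun q => dH n q + eps * dPhi n q) (df n)).
        apply pd_lin; auto. auto. ring.
      + apply LIN; apply smooth_cont; auto.
    - intros q t. unfold L.
      assert (D1 := deriv_dep _ H n (dH n) HH_dep ltac:(cbv beta; lia) (fun q => HdH n q Hn)).
      assert (D2 := deriv_dep _ Phi n (dPhi n) HPhi_dep ltac:(cbv beta; lia) (fun q => HdPhi n q Hn)).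
      assert (D3 := deriv_dep _ f n (df n) Hf_dep ltac:(cbv beta; lia) (fun q => Hdf n q Hn)).
      rewrite (dep_upd _ _ D1 2 ltac:(cbv beta; lia)), (dep_upd _ _ D2 2 ltac:(cbv beta; lia)),
        (dep_upd _ _ D3 2 ltac:(cbv beta; lia)). reflexivity.
    - apply HE_dep; auto.
    - intros c q Hc. destruct (smooth_has N (Et n) c (HE_smooth n Hn) Hc) as [D [HD _]]. eauto.
    - intro q. destruct (HWn n q Hn) as [pr Hq]. rewrite Hq, (RI_eq _ _ _ pr). reflexivity.
    - exists v1, v3. repeat split; auto. unfold L in Pid. lra. }
  assert (barF : forall a b, (3 <= a <= N)%nat -> (3 <= b <= N)%nat -> exists v3,
      has_pd (g a b) 1 p (- eps * v3) /\ has_pd (g a b) 2 p 0 /\ has_pd (g a b) 3 p v3 /\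
      (forall c, (1 <= c <= N)%nat -> exists dd, has_pd (g a b) c p dd)).
  { intros a' b' Ha' Hb'.
    set (Gab := fun y => fold_right Rplus 0 (map (fun i => mt i a' y * mt i b' y) (seq 3 (N - 2)))).
    assert (TR : forall c v, has_pd (fun q => Gab (shift eps q)) c p v -> has_pd (g a' b') c p v).
    { intros c v Hv. eapply pd_ext; [|exact Hv]. intro q. unfold g. rewrite gab by lia. reflexivity. }
    assert (mtpd : forall i e c y, (3 <= i <= N)%nat -> (3 <= e <= N)%nat -> (1 <= c <= N)%nat ->
                   exists dd, has_pd (mt i e) c y dd).
    { intros i e c y Hi He Hc. destruct (le_lt_dec i e).
      - destruct (smooth_has N (mt i e) c (Hmt_smooth i e ltac:(lia) ltac:(lia) ltac:(lia)) Hc) as [D [HD _]]. eauto.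
      - exists 0. apply pd_const. intro t. rewrite !(Hmt_zero i e) by lia. reflexivity. }
    destruct (shift_all N eps Gab p HN) as [v3 [B1 [B2 [B3 Ball]]]].
    - intros y y' Hyy. unfold Gab. f_equal. apply map_ext_in. intros i Hi. apply in_seq in Hi.
      rewrite (Hmt_dep i a' ltac:(lia) Ha' y y' Hyy), (Hmt_dep i b' ltac:(lia) Hb' y y' Hyy). reflexivity.
    - intros c y Hc. unfold has_pd, Gab.
      destruct (fold_pd (fun i t => mt i a' (upd y c t) * mt i b' (upd y c t)) (y c) (seq 3 (N - 2))) as [dd Hdd].
      + intros i Hi. apply in_seq in Hi.
        destruct (mtpd i a' c y ltac:(lia) Ha' Hc) as [d1 Hd1].
        destruct (mtpd i b' c y ltac:(lia) Hb' Hc) as [d2 Hd2].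
        eexists. apply (derivable_pt_lim_mult (fun t => mt i a' (upd y c t)) (fun t => mt i b' (upd y c t))); eauto.
      + exists dd. exact Hdd.
    - exists v3. split; [apply TR; auto|]. split; [apply TR; auto|]. split; [apply TR; auto|].
      intros c Hc. destruct (Ball c Hc) as [dd Hdd]. exists dd. apply TR; auto. }

  assert (Ent : exists v1 v2 v3, has_pd (g a b) 1 p v1 /\ has_pd (g a b) 2 p v2 /\
     has_pd (g a b) 3 p v3 /\ (forall c, (1 <= c <= N)%nat -> exists dd, has_pd (g a b) c p dd) /\
     v1 + Y p * v2 + eps * v3 + (if Nat.eqb b 1 then dya else 0) + (if Nat.eqb a 1 then dyb else 0) = 0).
  { assert (CST : forall k, (forall q, g a b q = k) -> exists v1 v2 v3, has_pd (g a b) 1 p v1 /\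
        has_pd (g a b) 2 p v2 /\ has_pd (g a b) 3 p v3 /\
        (forall c, (1 <= c <= N)%nat -> exists dd, has_pd (g a b) c p dd) /\
        v1 = 0 /\ v2 = 0 /\ v3 = 0).
    { intros k Hk. assert (Z : forall c, has_pd (g a b) c p 0) by (intro c; apply pd_const; intro; rewrite !Hk; auto).
      exists 0, 0, 0. repeat split; auto. intros; eauto. }
    assert (Ea : a = 1%nat \/ a = 2%nat \/ (3 <= a <= N)%nat) by lia.
    assert (Eb : b = 1%nat \/ b = 2%nat \/ (3 <= b <= N)%nat) by lia.
    destruct Ea as [-> | [-> | Ea]]; destruct Eb as [-> | [-> | Eb]].
    -
      assert (TR : forall c v, has_pd (fun q => 2 * H q) c p v -> has_pd (g 1%nat 1%nat) c p v).
      { intros c v Hv. eapply pd_ext; [|exact Hv]. intro q. unfold g. rewrite g11. reflexivity. }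
      exists (2 * DH1 p), (2 * 0), (2 * d).
      split; [apply TR, pd_scal; auto|]. split; [apply TR, pd_scal; auto|]. split; [apply TR, pd_scal; auto|].
      split.
      + intros c Hc. destruct (smooth_has N H c HH_smooth Hc) as [A1 [HA1 _]].
        eexists; apply TR, pd_scal; eauto.
      + rewrite (pd_uniq _ _ _ _ _ Hya Y1), (pd_uniq _ _ _ _ _ Hyb Y1). simpl. ring.
    - destruct (CST 1) as [v1 [v2 [v3 [? [? [? [? [-> [-> ->]]]]]]]]]. intro; unfold g; apply g12.
      exists 0, 0, 0. repeat split; auto.
      rewrite (pd_uniq _ _ _ _ _ Hyb Y2). simpl. ring.
    - assert (Eb' := Eb). destruct (Nat.eq_dec b 3) as [-> | Hb3].
      + destruct W3F as [v1 [v2 [v3 [P1 [P2 [P3 [Pall Pid]]]]]]].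
        assert (TR : forall c v, has_pd (W 3%nat) c p v -> has_pd (g 1%nat 3%nat) c p v).
        { intros c v Hv. eapply pd_ext; [|exact Hv]. intro q. unfold g. rewrite g1b by lia. reflexivity. }
        exists v1, v2, v3. split; [apply TR; auto|]. split; [apply TR; auto|]. split; [apply TR; auto|].
        split. intros c Hc; destruct (Pall c Hc) as [dd Hdd]; eauto.
        rewrite (pd_uniq _ _ _ _ _ Hyb Y3). simpl. lra.
      + destruct (WnF b ltac:(lia)) as [v1 [v3 [P1 [P2 [P3 [Pall Pid]]]]]].
        assert (TR : forall c v, has_pd (W b) c p v -> has_pd (g 1%nat b) c p v).
        { intros c v Hv. eapply pd_ext; [|exact Hv]. intro q. unfold g. rewrite g1b by lia. reflexivity. }
        exists v1, 0, v3. split; [apply TR; auto|]. split; [apply TR; auto|]. split; [apply TR; auto|].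
        split. intros c Hc; destruct (Pall c Hc) as [dd Hdd]; eauto.
        rewrite (pd_uniq _ _ _ _ _ Hyb (Yn b ltac:(lia))).
        destruct (Nat.eqb_spec b 1); [lia|]. simpl. lra.
    - destruct (CST 1) as [v1 [v2 [v3 [? [? [? [? [-> [-> ->]]]]]]]]]. intro; unfold g; apply g21.
      exists 0, 0, 0. repeat split; auto.
      rewrite (pd_uniq _ _ _ _ _ Hya Y2). simpl. ring.
    - destruct (CST 0) as [v1 [v2 [v3 [? [? [? [? [-> [-> ->]]]]]]]]]. intro; unfold g; apply g22.
      exists 0, 0, 0. repeat split; auto. simpl. ring.
    - destruct (CST 0) as [v1 [v2 [v3 [? [? [? [? [-> [-> ->]]]]]]]]]. intro; unfold g; apply g2b; lia.
      exists 0, 0, 0. repeat split; auto.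
      destruct (Nat.eqb_spec b 1); [lia|]. simpl. ring.
    - destruct (Nat.eq_dec a 3) as [-> | Ha3].
      + destruct W3F as [v1 [v2 [v3 [P1 [P2 [P3 [Pall Pid]]]]]]].
        assert (TR : forall c v, has_pd (W 3%nat) c p v -> has_pd (g 3%nat 1%nat) c p v).
        { intros c v Hv. eapply pd_ext; [|exact Hv]. intro q. unfold g. rewrite gb1 by lia. reflexivity. }
        exists v1, v2, v3. split; [apply TR; auto|]. split; [apply TR; auto|]. split; [apply TR; auto|].
        split. intros c Hc; destruct (Pall c Hc) as [dd Hdd]; eauto.
        rewrite (pd_uniq _ _ _ _ _ Hya Y3). simpl. lra.
      + destruct (WnF a ltac:(lia)) as [v1 [v3 [P1 [P2 [P3 [Pall Pid]]]]]].
        assert (TR : forall c v, has_pd (W a) c p v -> has_pd (g a 1%nat) c p v).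
        { intros c v Hv. eapply pd_ext; [|exact Hv]. intro q. unfold g. rewrite gb1 by lia. reflexivity. }
        exists v1, 0, v3. split; [apply TR; auto|]. split; [apply TR; auto|]. split; [apply TR; auto|].
        split. intros c Hc; destruct (Pall c Hc) as [dd Hdd]; eauto.
        rewrite (pd_uniq _ _ _ _ _ Hya (Yn a ltac:(lia))).
        destruct (Nat.eqb_spec a 1); [lia|]. simpl. lra.
    - destruct (CST 0) as [v1 [v2 [v3 [? [? [? [? [-> [-> ->]]]]]]]]]. intro; unfold g; apply ga2; lia.
      exists 0, 0, 0. repeat split; auto.
      destruct (Nat.eqb_spec a 1); [lia|]. simpl. ring.
    - destruct (barF a b Ea Eb) as [v3 [P1 [P2 [P3 Pall]]]].
      exists (- eps * v3), 0, v3. repeat split; auto.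
      destruct (Nat.eqb_spec a 1); [lia|]. destruct (Nat.eqb_spec b 1); [lia|]. ring. }
  destruct Ent as [v1 [v2 [v3 [G1 [G2 [G3 [Gall Gid]]]]]]].
  destruct (choose_pd N (g a b) p Gall) as [Dg HDg].
  assert (DX : forall c e dy, has_pd Y e p dy ->
            has_pd (fun q => X q c) e p (if Nat.eqb c 2 then dy else 0)).
  { intros c e dy Hdy. eapply pd_ext. intro q; symmetry; apply HXc.
    destruct (Nat.eqb_spec c 2).
    - subst. simpl. exact Hdy.
    - apply pd_const. intro t. replace (Nat.eqb c 2) with false by (symmetry; apply Nat.eqb_neq; auto).
      reflexivity. }
  exists Dg, (fun c => if Nat.eqb c 2 then dya else 0), (fun c => if Nat.eqb c 2 then dyb else 0).
  split.
  { intros c Hc. split; [auto|]. split; apply DX; auto. }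
  rewrite (sumN_3 N). 2: auto.
  2:{ intros c Hc. rewrite HX0 by lia. destruct (Nat.eqb_spec c 2); [lia|]. ring. }
  rewrite HX1, HX2, HX3.
  rewrite <- (pd_uniq _ _ _ _ _ G1 (HDg 1%nat ltac:(lia))),
          <- (pd_uniq _ _ _ _ _ G2 (HDg 2%nat ltac:(lia))),
          <- (pd_uniq _ _ _ _ _ G3 (HDg 3%nat ltac:(lia))).
  unfold g. rewrite (g2x N _ _ _ b p Hb), (gx2 N _ _ _ a p Ha). cbn [Nat.eqb].
  destruct (Nat.eqb b 1); destruct (Nat.eqb a 1); lra.
Qed.
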